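(* Let $\alpha,\beta,\varepsilon>0$, $r\in\mathbb{N}$, $S\subseteq\mathbb{N}$ an infinite set, $\mathcal{A}=\mathcal{A}(n)$ and $X=X(n)$ graph properties (events in $G(n,p)$), and $p=p(n)$ with $p=\Theta(1/n)$, such that for every $n\in S$, $\Pr[X]>\beta$ and $\Pr[\mathcal{A}\mid X]>\alpha$ (probabilities in $G(n,p)$). For every integer $i\ge 0$ let $B_i$ be the event that the graph on $\{1,\dots,n\}$ satisfies: (1) there are exactly $i$ edges between $\{1,\dots,r\}$ and $\{r+1,\dots,n\}$; (2) there is no edge joining two vertices of $\{1,\dots,r\}$; (3) no vertex of $\{r+1,\dots,n\}$ has more than one neighbour in $\{1,\dots,r\}$. Then there exists $i\ge 0$ such that $\Pr[\mathcal{A}\mid B_i\cap X]>\alpha-\varepsilon$ for infinitely many $n\in S$.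
   Context: $G(n,p)$ denotes the random graph on vertex set $\{1,\dots,n\}$ in which each possible edge appears independently with probability $p=p(n)$. *)

(* Defs.v *)
From mathcomp Require Import all_boot.
From Stdlib Require Import Reals.
Set Implicit Arguments. Unset Strict Implicit. Unset Printing Implicit Defensive.

(* Vertex set {1,...,n} is modelled as 'I_n (vertex k+1 of the paper is k).
   A graph on 'I_n is a set of ordered pairs (u,v) with u < v (each edge once). *)
Definition graph (n : nat) := {set 'I_n * 'I_n}.

Definition Kn (n : nat) : graph n := [set e : 'I_n * 'I_n | (e.1 < e.2)%N].

Definition adj (n : nat) (G : graph n) (u v : 'I_n) : bool :=
  ((u, v) \in G) || ((v, u) \in G).

Definition event := forall n : nat, graph n -> bool.

Definition gnp_weight (n : nat) (p : R) (G : graph n) : R :=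
  (p ^ #|G| * (1 - p) ^ (#|Kn n| - #|G|))%R.

Definition Pr (n : nat) (p : R) (E : graph n -> bool) : R :=
  \big[Rplus/0%R]_(G : graph n | (G \subset Kn n) && E G) gnp_weight p G.

Definition andE (n : nat) (E F : graph n -> bool) : graph n -> bool :=
  fun G => E G && F G.

Definition CPr (n : nat) (p : R) (E F : graph n -> bool) : R :=
  (Pr p (andE E F) / Pr p F)%R.

(* lower vertices {1,...,r} of the paper = indices < r *)
Definition low (r n : nat) (v : 'I_n) : bool := (v < r)%N.

Definition B (r i n : nat) (G : graph n) : bool :=
  [&& #|[set e in G | low r e.1 != low r e.2]| == i,
      [forall e in G, ~~ (low r e.1 && low r e.2)] &
      [forall v : 'I_n, ~~ low r v ==>
         (#|[set u : 'I_n | low r u && adj G u v]| <= 1)%N]].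

Definition Theta_inv_n (p : nat -> R) : Prop :=
  exists c C : R, (0 < c)%R /\ (0 < C)%R /\ exists N : nat, forall n : nat, (N <= n)%N ->
    (c / INR n <= p n <= C / INR n)%R.

Definition infinite_set (S : nat -> Prop) : Prop :=
  forall m : nat, exists n : nat, (m <= n)%N /\ S n.

(* Main.v *)
Require Import Defs.
From HB Require Import structures.
From Stdlib Require Import Lra Classical.
From Stdlib Require ZArith.
From mathcomp Require Import zify.
From mathcomp Require Import all_boot.
From Stdlib Require Import Reals.
Set Implicit Arguments. Unset Strict Implicit.
Local Open Scope R_scope.

Lemma RplusA : associative Rplus. Proof. by move=> x y z; rewrite Rplus_assoc. Qed.
Lemma RmultA : associative Rmult. Proof. by move=> x y z; rewrite Rmult_assoc. Qed.
HB.instance Definition _ := Monoid.isComLaw.Build R 0 Rplus RplusA Rplus_comm Rplus_0_l.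
HB.instance Definition _ := Monoid.isComLaw.Build R 1 Rmult RmultA Rmult_comm Rmult_1_l.
Lemma Rmul0l : left_zero 0 Rmult. Proof. move=> x; exact: Rmult_0_l. Qed.
Lemma Rmul0r : right_zero 0 Rmult. Proof. move=> x; exact: Rmult_0_r. Qed.
HB.instance Definition _ := Monoid.isMulLaw.Build R 0 Rmult Rmul0l Rmul0r.
Lemma RDl : left_distributive Rmult Rplus. Proof. move=> x y z; exact: Rmult_plus_distr_r. Qed.
Lemma RDr : right_distributive Rmult Rplus. Proof. move=> x y z; exact: Rmult_plus_distr_l. Qed.
HB.instance Definition _ := Monoid.isAddLaw.Build R Rmult Rplus RDl RDr.



Local Close Scope R_scope.

Module ModK.
Local Open Scope R_scope.

Definition indb (b : bool) : R := if b then 1 else 0.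

Lemma prod_const (T : finType) (A : {pred T}) (c : R) :
  \big[Rmult/1]_(e in A) c = c ^ #|A|.
Proof. rewrite big_const; elim: #|A| => //= k ->; by []. Qed.

Lemma key n p (Fs : graph n) : Fs \subset Kn n ->
  \big[Rplus/0]_(G : graph n | G \subset Kn n) (gnp_weight p G * indb (Fs \subset G)) = p ^ #|Fs|.
Proof.
move=> sFK.
pose Fv e := if e \in Kn n then p else 0.
pose Gv e := if e \in Kn n then (if e \in Fs then 0 else 1 - p) else 1.
have H := @bigA_distr R 0 1 Rmult Rplus _ Fv Gv.
have L : \big[Rmult/1]_e (Fv e + Gv e) = p ^ #|Fs|.
  rewrite -prod_const [RHS]big_mkcond /=. apply: eq_bigr => e _.
  rewrite /Fv /Gv; case: ifP => eK; case: ifP => eF.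
  - by rewrite Rplus_0_r.
  - by ring.
  - by move: eK; rewrite (subsetP sFK).
  - by rewrite Rplus_0_l.
rewrite -L H [LHS]big_mkcond /=. apply: eq_big => [J|J _] //.
case: ifP => JK.
  case: (boolP (Fs \subset J)) => FJ /=.
    rewrite /indb Rmult_1_r /gnp_weight; symmetry.
    transitivity (\big[Rmult/1]_e ((if e \in J then p else 1) * (if e \in Kn n :\: J then 1 - p else 1))).
      apply: eq_bigr => e _; rewrite /Fv /Gv in_setD.
      case: (boolP (e \in J)) => eJ /=.
        by rewrite (subsetP JK) // Rmult_1_r.
      rewrite Rmult_1_l; case: ifP => // _.
      by case: ifP => // eF; move: eJ; rewrite (subsetP FJ).
    rewrite big_split /= -!big_mkcond /= !prod_const cardsD.
    by rewrite (setIidPr JK).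
  rewrite /indb Rmult_0_r; symmetry.
  case/subsetPn: FJ => e eF eJ.
  rewrite (bigD1 e) //= ifN // /Gv (subsetP sFK) // eF.
  by rewrite Rmult_0_l.
case/subsetPn: JK => e eJ eK.
symmetry; rewrite (bigD1 e) //= eJ /Fv ifN //.
by rewrite Rmult_0_l.
Qed.

End ModK.
Import ModK.

Module ModE.
Local Open Scope R_scope.

Section Ex.
Variables (n : nat) (p : R).
Hypothesis p01 : 0 <= p <= 1.

Definition Ex (f : graph n -> R) :=
  \big[Rplus/0]_(G : graph n | G \subset Kn n) (gnp_weight p G * f G).

Lemma w_ge0 (G : graph n) : 0 <= gnp_weight p G.
Proof. rewrite /gnp_weight; apply: Rmult_le_pos; apply: pow_le; lra. Qed.

Lemma PrE (Ev : graph n -> bool) : Pr p Ev = Ex (fun G => indb (Ev G)).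
Proof.
rewrite /Pr /Ex big_mkcondr /=.

apply: eq_bigr => G _; rewrite /indb; case: (Ev G); ring.
Qed.

Lemma Ex_le (f g : graph n -> R) : (forall G : graph n, G \subset Kn n -> f G <= g G) -> Ex f <= Ex g.
Proof.
move=> H; rewrite /Ex; apply: (big_ind2 (fun x y => x <= y)).
- lra.
- move=> *; lra.
- move=> G GK; apply: Rmult_le_compat_l; [exact: w_ge0| exact: H].
Qed.

Lemma Ex_add f g : Ex (fun G => f G + g G) = Ex f + Ex g.
Proof. rewrite /Ex -big_split /=; apply: eq_bigr => G _; ring. Qed.

Lemma Ex_scale c f : Ex (fun G => c * f G) = c * Ex f.
Proof. rewrite /Ex big_distrr /=; apply: eq_bigr => G _; ring. Qed.

Lemma Ex_sum (T : finType) (P : {pred T}) (f : T -> graph n -> R) :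
  Ex (fun G => \big[Rplus/0]_(t in P) f t G) = \big[Rplus/0]_(t in P) Ex (f t).
Proof.
rewrite /Ex exchange_big /=; apply: eq_bigr => G _.
by rewrite big_distrr.
Qed.

Lemma Ex_sub (Fs : graph n) : Fs \subset Kn n -> Ex (fun G => indb (Fs \subset G)) = p ^ #|Fs|.
Proof. exact: key. Qed.

Lemma Ex_edge e : e \in Kn n -> Ex (fun G => indb (e \in G)) = p.
Proof.
move=> eK.
rewrite (_ : Ex _ = Ex (fun G => indb ([set e] \subset G))); last first.
  by apply: eq_bigr => G _; rewrite sub1set.
rewrite Ex_sub ?sub1set // cards1 /=; ring.
Qed.

End Ex.

Lemma sum_ones (T : finType) (A : {pred T}) : \big[Rplus/0]_(e in A) 1 = INR #|A|.
Proof. rewrite big_const; elim: #|A| => [//|k IH]; rewrite iterS IH S_INR; ring. Qed.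

Lemma sum_const (T : finType) (A : {pred T}) c : \big[Rplus/0]_(e in A) c = INR #|A| * c.
Proof. rewrite big_const; elim: #|A| => [/=|k IH]; [ring| rewrite iterS IH S_INR; ring]. Qed.

Lemma sum_ge_term (T : finType) (A : {pred T}) (f : T -> R) t :
  (forall x, 0 <= f x) -> t \in A -> f t <= \big[Rplus/0]_(x in A) f x.
Proof.
move=> f0 tA; rewrite (bigD1 t) //=.
have : 0 <= \big[Rplus/0]_(i in A | i != t) f i.
  by apply: (big_ind (fun x => 0 <= x)) => //; [lra| move=> *; lra].
lra.
Qed.

Lemma sum_ge0 (T : finType) (A : {pred T}) (f : T -> R) :
  (forall x, 0 <= f x) -> 0 <= \big[Rplus/0]_(x in A) f x.
Proof. move=> f0; apply: (big_ind (fun x => 0 <= x)) => //; [lra| move=> *; lra]. Qed.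

Lemma sum_ind_eq (T : finType) (A : {pred T}) (B : {pred T}) :
  \big[Rplus/0]_(x in A) indb (x \in B) = INR #|[predI A & B]|.
Proof.
rewrite -sum_ones [RHS]big_mkcond [LHS]big_mkcond /=; apply: eq_bigr => x _.
rewrite /indb [x \in [predI A & B]]inE; by case: (x \in A); case: (x \in B).
Qed.

End ModE.
Import ModE.

Module ModG.
Section Gr.
Variables (r n : nat).

Definition lowset : {set 'I_n} := [set v | low r v].
Definition LL : {set 'I_n * 'I_n} := [set e in Kn n | low r e.1 && low r e.2].
Definition Cr : {set 'I_n * 'I_n} := [set e in Kn n | low r e.1 != low r e.2].
Definition T3 : {set ('I_n * 'I_n) * 'I_n} :=
  [set t | [&& low r t.1.1, low r t.1.2, (t.1.1 < t.1.2)%nat & ~~ low r t.2]].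
Definition F3 (t : ('I_n * 'I_n) * 'I_n) : graph n := [set (t.1.1, t.2); (t.1.2, t.2)].

Lemma card_low : (#|lowset| <= r)%nat.
Proof.
rewrite cardE -(size_map val) -[X in (_ <= X)%nat](size_iota 0 r).
apply: uniq_leq_size; first by rewrite map_inj_uniq ?enum_uniq //; exact: val_inj.
move=> x /mapP [y]; rewrite mem_enum inE /low => yr ->.
by rewrite mem_iota.
Qed.

Lemma card_LL : (#|LL| <= r * r)%nat.
Proof.
apply: (@leq_trans #|setX lowset lowset|).
  apply: subset_leq_card; apply/subsetP => -[a b]; rewrite !inE /= => /andP [_ /andP [-> ->]].
  by [].
by rewrite cardsX leq_mul // card_low.
Qed.

Lemma card_T3 : (#|T3| <= r * r * n)%nat.
Proof.
apply: (@leq_trans #|setX (setX lowset lowset) [set: 'I_n]|).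
  apply: subset_leq_card; apply/subsetP => -[[a b] c]; rewrite !inE /=.
  by case/and4P => -> -> _ _.
by rewrite !cardsX cardsT card_ord !leq_mul // card_low.
Qed.

Lemma card_Cr : (#|Cr| <= 2 * r * n)%nat.
Proof.
apply: (@leq_trans #|setX lowset [set: 'I_n] :|: setX [set: 'I_n] lowset|).
  apply: subset_leq_card; apply/subsetP => -[a b]; rewrite !inE /=.
  by case/andP => _; case: (low r a); case: (low r b).
apply: leq_trans (leq_card_setU _ _) _.
rewrite !cardsX cardsT card_ord.
have := card_low; nia.
Qed.

Lemma F3_sub t : t \in T3 -> F3 t \subset Kn n.
Proof.
case: t => [[a b] c]; rewrite !inE /= /low => /and4P [ar br ab cr].
apply/subsetP => e; rewrite /F3 /Kn !inE => /orP [] /eqP -> /=; lia.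
Qed.

Lemma F3_card t : t \in T3 -> #|F3 t| = 2%nat.
Proof.
case: t => [[a b] c]; rewrite !inE /= => /and4P [ar br ab cr].
rewrite cards2; case: eqP => // [[E]]; move: ab; rewrite E ltnn.
by [].
Qed.

Definition c2 (G : graph n) := [forall e in G, ~~ (low r e.1 && low r e.2)].
Definition c3 (G : graph n) := [forall v : 'I_n, ~~ low r v ==>
         (#|[set u : 'I_n | low r u && adj G u v]| <= 1)%nat].
Definition crs (G : graph n) := #|[set e in G | low r e.1 != low r e.2]|.

Lemma B_eq i G : B r i G = [&& crs G == i, c2 G & c3 G].
Proof. by []. Qed.

Local Open Scope R_scope.
Lemma sum_B K G (Y : bool) :
  \big[Rplus/0]_(i < K.+1) indb (B r i G && Y) = indb (leq (crs G) K && (c2 G && c3 G && Y)).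
Proof.
elim: K => [|K IH].
  rewrite big_ord_recr big_ord0 /= B_eq Rplus_0_l /indb.
  by case: (crs G) => [|k]; rewrite //=; case: (c2 G && c3 G && Y); case: (c2 G); case: (c3 G); case: Y.
rewrite big_ord_recr /= IH B_eq /indb.
case: (ltngtP (crs G) K.+1) => H.
- have -> : (crs G <= K)%nat = true by lia.
  by case: (c2 G); case: (c3 G); case: (Y) => /=; lra.
- have -> : (crs G <= K)%nat = false by lia.
  by case: (c2 G); case: (c3 G); case: (Y) => /=; lra.
- have -> : (crs G <= K)%nat = false by lia.
  by case: (c2 G); case: (c3 G); case: (Y) => /=; lra.
Qed.
End Gr.

End ModG.
Import ModG.

Module ModH.

Section Bad.
Variables (r n : nat).

Lemma adj_low (G : graph n) u v : G \subset Kn n -> low r u -> ~~ low r v -> adj G u v -> (u, v) \in G.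
Proof.
move=> GK lu lv /orP [] // vu; have := subsetP GK _ vu; rewrite inE /=.
move: lu lv; rewrite /low; lia.
Qed.

Local Open Scope R_scope.

Lemma indb_ge0 b : 0 <= indb b.
Proof. by rewrite /indb; case: b; lra. Qed.

Definition Good K (G : graph n) := leq (crs r G) K && (c2 r G && c3 r G).

Definition badR K (G : graph n) :=
  \big[Rplus/0]_(e in LL r n) indb (e \in G) + \big[Rplus/0]_(t in T3 r n) indb (F3 t \subset G)
  + / INR K.+1 * \big[Rplus/0]_(e in Cr r n) indb (e \in G).

Lemma bad_bound K (G : graph n) : G \subset Kn n -> indb (~~ Good K G) <= badR K G.
Proof.
move=> GK; rewrite /badR.
have S1 := @sum_ge0 _ (LL r n) (fun e => indb (e \in G)) (fun _ => indb_ge0 _).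
have S2 := @sum_ge0 _ (T3 r n) (fun t => indb (F3 t \subset G)) (fun _ => indb_ge0 _).
have S3 := @sum_ge0 _ (Cr r n) (fun e => indb (e \in G)) (fun _ => indb_ge0 _).
have IK : 0 < / INR K.+1 by apply: Rinv_0_lt_compat; apply: lt_0_INR; lia.
have S3' : 0 <= / INR K.+1 * \big[Rplus/0]_(e in Cr r n) indb (e \in G) by apply: Rmult_le_pos; lra.
rewrite /Good; case: (boolP (leq (crs r G) K)) => hK; last first.
  rewrite (@sum_ind_eq _ (Cr r n)) andFb.
  have -> : #|[predI Cr r n & mem G]| = crs r G.
    rewrite /crs; apply: eq_card => x; rewrite !inE.
    case xG: (x \in G); rewrite ?andbT ?andbF //.
    by have := subsetP GK x xG; rewrite inE => ->.
  have h1 : INR K.+1 <= INR (crs r G) by apply: le_INR; lia.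
  have h2 : 1 <= / INR K.+1 * INR (crs r G).
    rewrite -(Rinv_l (INR K.+1)); last by apply: not_0_INR.
    by apply: Rmult_le_compat_l; lra.
  have -> : indb (~~ false) = 1 by []. lra.
rewrite andTb; case: (boolP (c2 r G)) => h2; last first.
  case/forallPn: h2 => e; rewrite negb_imply negbK => /andP [eG el].
  have eLL : e \in LL r n by rewrite inE (subsetP GK) // el.
  have := @sum_ge_term _ _ (fun e => indb (e \in G)) _ (fun _ => indb_ge0 _) eLL.
  have -> : indb (e \in G) = 1 by rewrite /indb eG.
  have -> : indb (~~ (false && c3 r G)) = 1 by []. lra.
rewrite andTb; case: (boolP (c3 r G)) => h3; first by have -> : indb (~~ (true && true)) = 0 by []; lra.
case/forallPn: h3 => v; rewrite negb_imply -ltnNge => /andP [vh] /card_gt1P [u1 [u2 []]].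
rewrite !inE => /andP [l1 a1] /andP [l2 a2] neq.
have g1 := adj_low GK l1 vh a1.
have g2 := adj_low GK l2 vh a2.
have [t [tT tG]] : exists t, t \in T3 r n /\ F3 t \subset G.
  case: (ltngtP u1 u2) => h.
  - exists ((u1, u2), v); rewrite !inE /= l1 l2 h vh; split => //.
    by apply/subsetP => e; rewrite !inE => /orP [] /eqP ->.
  - exists ((u2, u1), v); rewrite !inE /= l1 l2 h vh; split => //.
    by apply/subsetP => e; rewrite !inE => /orP [] /eqP ->.
  - by move: neq; rewrite (val_inj h) eqxx.
have h : indb (F3 t \subset G) <= \big[Rplus/0]_(t in T3 r n) indb (F3 t \subset G).
  exact: (@sum_ge_term _ _ (fun t => indb (F3 t \subset G)) _ (fun _ => indb_ge0 _) tT).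
move: h; have -> : indb (F3 t \subset G) = 1 by rewrite /indb tG.
have -> : indb (~~ (true && false)) = 1 by []. lra.
Qed.

Lemma Ex_bad K p : 0 <= p <= 1 ->
  Ex p (badR K) = INR #|LL r n| * p + INR #|T3 r n| * p ^ 2 + / INR K.+1 * (INR #|Cr r n| * p).
Proof.
move=> p01; rewrite /badR !Ex_add Ex_scale !Ex_sum.
rewrite -!sum_const.
congr (_ + _ + _ * _).
- by apply: eq_bigr => e eL; rewrite Ex_edge //; move: eL; rewrite inE => /andP [].
- by apply: eq_bigr => t tT; rewrite Ex_sub ?(F3_card tT) ?(F3_sub tT).
- by apply: eq_bigr => e eL; rewrite Ex_edge //; move: eL; rewrite inE => /andP [].
Qed.
End Bad.

End ModH.
Import ModH.

Module ModM.

Lemma pigeon K (Q : nat -> nat -> Prop) :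
  (forall m, exists n, (m <= n)%nat /\ exists i, (i <= K)%nat /\ Q i n) ->
  exists i, forall m, exists n, (m <= n)%nat /\ Q i n.
Proof.
elim: K Q => [|K IH] Q H.
  exists 0%nat => m; have [n [mn [i [iK Qi]]]] := H m.
  by exists n; split => //; have <- : i = 0%nat by lia.
case: (classic (forall m, exists n, (m <= n)%nat /\ Q K.+1 n)) => [h|h].
  by exists K.+1.
have [m0 hm0] : exists m0, forall n, (m0 <= n)%nat -> ~ Q K.+1 n.
  apply: NNPP => hn; apply: h => m.
  apply: NNPP => hm; apply: hn; exists m => n mn Qn; apply: hm; by exists n.
apply: IH => m; have [n [mn [i [iK Qi]]]] := H (maxn m m0).
exists n; split; first lia.
exists i; split => //.
case: (ltngtP i K.+1) => h'; [lia|lia|].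
by subst i; exfalso; apply: (hm0 n) => //; lia.
Qed.

Local Open Scope R_scope.

Lemma sum_lt_ex M (a b : nat -> R) :
  \big[Rplus/0]_(i < M) b i < \big[Rplus/0]_(i < M) a i -> exists i, (i < M)%nat /\ b i < a i.
Proof.
rewrite -!(big_mkord xpredT).
elim: M => [|M IH];  first by rewrite !big_geq // => h; exfalso; lra.
rewrite !big_nat_recr //= => h.
case: (Rlt_or_le (b M) (a M)) => h'; first by exists M; split; [lia|].
have [i [iM hi]] : exists i, (i < M)%nat /\ b i < a i by apply: IH; lra.
by exists i; split => //; lia.
Qed.

Lemma Ex_ext n p (f g : graph n -> R) : (forall G, f G = g G) -> Ex p f = Ex p g.
Proof. by move=> h; apply: eq_bigr => G _; rewrite h. Qed.

Lemma est (Rr Nn p C K1 d a b c : R) :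
  0 <= p -> 0 < Nn -> p * Nn <= C -> 0 <= Rr -> 0 <= a <= Rr * Rr -> 0 <= b <= Rr * Rr * Nn ->
  0 <= c <= 2 * Rr * Nn -> 0 < K1 -> 4 * Rr * C <= d * K1 ->
  2 * (Rr * Rr * C + Rr * Rr * C * C) <= d * Nn ->
  a * p + b * p ^ 2 + / K1 * (c * p) <= d.
Proof.
move=> p0 N0 pN R0 ha hb hc K0 hK hN.
have C0 : 0 <= C by nra.
have e1 : a * p * Nn <= Rr * Rr * C by nra.
have e2 : b * p ^ 2 * Nn <= Rr * Rr * C * C.
  have hp2 : 0 <= p ^ 2 * Nn by nra.
  have h : b * (p ^ 2 * Nn) <= Rr * Rr * Nn * (p ^ 2 * Nn).
    by apply: Rmult_le_compat_r => //; lra.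
  have -> : b * p ^ 2 * Nn = b * (p ^ 2 * Nn) by ring.
  apply: Rle_trans h _.
  have -> : Rr * Rr * Nn * (p ^ 2 * Nn) = Rr * Rr * (p * Nn) * (p * Nn) by ring.
  have : 0 <= Rr * Rr by nra.
  move=> h0; apply: Rmult_le_compat; nra.
have e3 : c * p * 2 <= d * K1.
  have h1 : c * p <= 2 * Rr * Nn * p by nra.
  have h2 : 2 * Rr * Nn * p <= 2 * Rr * C by nra.
  lra.
have f1 : (a * p + b * p ^ 2) * Nn <= d / 2 * Nn by nra.
have f2 : a * p + b * p ^ 2 <= d / 2.
  apply: (Rmult_le_reg_r Nn) => //.
have f3 : / K1 * (c * p) <= d / 2.
  apply: (Rmult_le_reg_r K1) => //.
  rewrite Rmult_comm -Rmult_assoc Rinv_r; last lra.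
  lra.
lra.
Qed.

End ModM.
Import ModM.

Module ModP2.
Local Open Scope R_scope.

Lemma Ex_sumo n p M (f : nat -> graph n -> R) :
  Ex p (fun G => \big[Rplus/0]_(i < M) f i G) = \big[Rplus/0]_(i < M) Ex p (f i).
Proof.
rewrite /Ex exchange_big /=; apply: eq_bigr => G _.
by rewrite big_distrr.
Qed.

Lemma Pr_ge0 n p (Ev : graph n -> bool) : 0 <= p <= 1 -> 0 <= Pr p Ev.
Proof.
move=> p01; apply: (big_ind (fun x => 0 <= x)) => //; first lra.
  by move=> *; lra.
by move=> G _; apply: w_ge0.
Qed.

Lemma Pr_le n p (E1 E2 : graph n -> bool) : 0 <= p <= 1 ->
  (forall G, E1 G -> E2 G) -> Pr p E1 <= Pr p E2.
Proof.
move=> p01 h; rewrite !PrE; apply: (Ex_le p01) => G _.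
rewrite /indb; case e1: (E1 G); first by rewrite h //; lra.
by case: (E2 G); lra.
Qed.

Lemma per_n r n p (A X : graph n -> bool) alpha beta eps delta K :
  0 <= p <= 1 -> 0 < alpha -> 0 < beta -> 0 < eps ->
  Pr p X > beta -> CPr p A X > alpha ->
  Ex p (fun G : graph n => indb (~~ Good r K G)) <= delta -> delta * (1 + eps) < eps * beta ->
  exists i, (i <= K)%nat /\ Pr p (andE (B r i (n:=n)) X) > 0 /\
    CPr p A (andE (B r i (n:=n)) X) > alpha - eps.
Proof.
move=> p01 a0 b0 e0 hX hC hD hd.
set PX := Pr p X in hX hC *.
set PAX := Pr p (andE A X).
set D := Ex p _ in hD.
have PX0 : 0 < PX by lra.
have hAX : alpha * PX < PAX.
  move: hC; rewrite /CPr -/PX -/PAX => hC.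
  have := Rmult_lt_compat_r PX _ _ PX0 hC.
  rewrite /Rdiv Rmult_assoc Rinv_l; lra.
pose q i := Pr p (andE (B r i (n:=n)) X).
pose a i := Pr p (andE A (andE (B r i (n:=n)) X)).
pose L (G : graph n) := leq (crs r G) K && (c2 r G && c3 r G).
have SQ : \big[Rplus/0]_(i < K.+1) q i = Ex p (fun G => indb (L G && X G)).
  rewrite /q; under eq_bigr => i _ do rewrite PrE.
  rewrite -(@Ex_sumo n p K.+1 (fun i G => indb (andE (B r i (n:=n)) X G))); apply: Ex_ext => G.
  by rewrite sum_B /L andbA.
have SA : \big[Rplus/0]_(i < K.+1) a i = Ex p (fun G => indb (L G && (A G && X G))).
  rewrite /a; under eq_bigr => i _ do rewrite PrE.
  rewrite -(@Ex_sumo n p K.+1 (fun i G => indb (andE A (andE (B r i (n:=n)) X) G))); apply: Ex_ext => G.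
  rewrite /L -andbA -sum_B; apply: eq_bigr => i _.
  by rewrite /andE; case: (A G); case: (B r i G); case: (X G).
have h1 : Ex p (fun G => indb (L G && X G)) <= PX.
  rewrite /PX PrE; apply: (Ex_le p01) => G _; rewrite /indb.
  by case: (L G); case: (X G) => /=; lra.
have h2 : PX <= Ex p (fun G => indb (L G && X G)) + D.
  rewrite /PX PrE /D -Ex_add; apply: (Ex_le p01) => G _; rewrite /indb /Good -/(L G).
  by case: (L G); case: (X G) => /=; lra.
have h3 : PAX <= Ex p (fun G => indb (L G && (A G && X G))) + D.
  rewrite /PAX PrE /D -Ex_add; apply: (Ex_le p01) => G _; rewrite /indb /Good -/(L G) /andE.
  by case: (L G); case: (A G); case: (X G) => /=; lra.
set sq := Ex p (fun G => indb (L G && X G)) in SQ h1 h2.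
set sa := Ex p (fun G => indb (L G && (A G && X G))) in SA h3.
have m1 : alpha * sq <= alpha * PX by apply: Rmult_le_compat_l; lra.
have m2 : eps * (PX - delta) <= eps * sq by apply: Rmult_le_compat_l; lra.
have m3 : eps * beta <= eps * PX by apply: Rmult_le_compat_l; lra.
have main : (alpha - eps) * sq < sa.
  have : alpha * PX - delta < sa by lra.
  nra.
have [i [iK hi]] : exists i, (i < K.+1)%nat /\ (alpha - eps) * q i < a i.
  apply: sum_lt_ex; rewrite SA -big_distrr /= SQ //.
have aq : a i <= q i.
  by apply: Pr_le => // G; rewrite /andE => /andP [].
have a0' : 0 <= a i by apply: Pr_ge0.
have q0 : 0 < q i.
  case: (Rle_or_lt (q i) 0) => // hq.
  have : q i = 0 by have := Pr_ge0 (andE (B r i (n:=n)) X) p01; rewrite -/(q i); lra.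
  move=> e; rewrite e Rmult_0_r in hi; lra.
exists i; split; first lia.
split => //.
rewrite /CPr -/(q i) -/(a i).
apply: (Rmult_lt_reg_r (q i)) => //.
rewrite /Rdiv Rmult_assoc Rinv_l; lra.
Qed.

End ModP2.
Import ModP2.


Lemma nat_big (x : R) : exists k : nat, (x <= INR k)%R.
Proof.
have [h1 _] := archimed x.
case: (ZArith_dec.Z_lt_le_dec 0 (up x)) => h.
  exists (Z.to_nat (up x)); rewrite INR_IZR_INZ Znat.Z2Nat.id; [lra|lia].
exists 0%nat; apply IZR_le in h; simpl; lra.
Qed.

Unset Implicit Arguments.
Theorem mainTheorem3
  (alpha beta eps : R) (r : nat) (S : nat -> Prop) (A X : event) (p : nat -> R) :
  (0 < alpha)%R -> (0 < beta)%R -> (0 < eps)%R ->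
  infinite_set S ->
  (forall n : nat, (0 <= p n <= 1)%R) ->
  Theta_inv_n p ->
  (forall n : nat, S n -> (Pr (p n) (X n) > beta)%R /\ (CPr (p n) (A n) (X n) > alpha)%R) ->
  exists i : nat, forall m : nat, exists n : nat,
    (m <= n)%N /\ S n /\
    (Pr (p n) (andE (B r i (n:=n)) (X n)) > 0)%R /\
    (CPr (p n) (A n) (andE (B r i (n:=n)) (X n)) > alpha - eps)%R.
Proof.
move=> a0 b0 e0 infS p01 [c [C [c0 [C0 [N hN]]]]] hS.
pose delta := (eps * beta / (2 * (1 + eps)))%R.
have d0 : (0 < delta)%R.
  rewrite /delta /Rdiv; apply: Rmult_lt_0_compat; first nra.
  apply: Rinv_0_lt_compat; lra.
have hd : (delta * (1 + eps) < eps * beta)%R.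
  have -> : (delta * (1 + eps) = eps * beta / 2)%R by rewrite /delta; field; lra.
  nra.
pose Rr := INR r.
have R0 : (0 <= Rr)%R by apply: pos_INR.
have [K hK0] := nat_big (4 * Rr * C / delta).
have hK : (4 * Rr * C <= delta * INR K.+1)%R.
  have h1 : (INR K <= INR K.+1)%R by apply: le_INR; lia.
  have h2 : (4 * Rr * C / delta * delta = 4 * Rr * C)%R by field; lra.
  nra.
have [M0 hM0] := nat_big (2 * (Rr * Rr * C + Rr * Rr * C * C) / delta).
pose Q i n := S n /\ (Pr (p n) (andE (B r i (n:=n)) (X n)) > 0)%R /\
    (CPr (p n) (A n) (andE (B r i (n:=n)) (X n)) > alpha - eps)%R.
have [i hi] : exists i, forall m, exists n, (m <= n)%N /\ Q i n.
  apply: (@pigeon K) => m.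
  have [n [mn Sn]] := infS (maxn m (maxn N (maxn M0 1))).
  exists n; split; first lia.
  have [hX hC] := hS n Sn.
  have n0 : (0 < INR n)%R by apply: lt_0_INR; lia.
  have pN : (p n * INR n <= C)%R.
    have [_ h] := hN n ltac:(lia).
    have -> : C = (C / INR n * INR n)%R by field; lra.
    by apply: Rmult_le_compat_r; lra.
  have hD : (Ex (p n) (fun G : graph n => indb (~~ Good r K G)) <= delta)%R.
    apply: Rle_trans (@Ex_le n (p n) (p01 n) _ (badR r K) (fun G GK => @bad_bound r n K G GK)) _.
    rewrite (Ex_bad r n K (p01 n)).
    have hn : (2 * (Rr * Rr * C + Rr * Rr * C * C) <= delta * INR n)%R.
      have h1 : (INR M0 <= INR n)%R by apply: le_INR; lia.
      have h2 : (2 * (Rr * Rr * C + Rr * Rr * C * C) / delta * delta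
                 = 2 * (Rr * Rr * C + Rr * Rr * C * C))%R by field; lra.
      nra.
    have p0 : (0 <= p n)%R by have := p01 n; lra.
    apply: (est (Rr := Rr) (Nn := INR n) (C := C)) => //.
    - split; first by apply: pos_INR.
      by rewrite /Rr -mult_INR; apply: le_INR; apply/leP; apply: card_LL.
    - split; first by apply: pos_INR.
      by rewrite /Rr -!mult_INR; apply: le_INR; apply/leP; apply: card_T3.
    - split; first by apply: pos_INR.
      have -> : (2 * Rr * INR n = INR (2 * r * n))%R by rewrite /Rr !mult_INR.
      by apply: le_INR; apply/leP; apply: card_Cr.
    - by apply: lt_0_INR; lia.
  have [j [jK hj]] := per_n (p01 n) a0 b0 e0 hX hC hD hd.
  by exists j; split => //.
exists i => m; have [n [mn [Sn h]]] := hi m.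
by exists n.
Qed.
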